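(* Let $\mathbb{E}$ be a countable subset of $\mathbb{R}$ with $0\in\mathbb{E}$, and let $\mathcal{V}$ be a closed $\mathbb{E}$-vine over a Polish space $X$. If $\mathcal{V}$ is well founded, then $o(\mathcal{V})<\omega_1$.
   Context: For finite $G\subset\mathbb{N}$, $[\mathbb{E},G]=\{f:\mathbb{N}\to\mathbb{E}:\mathrm{supp}(f)\subset G\}$. An $\mathbb{E}$-bunch over $X$ is an element $(x_f)_{f\in[\mathbb{E},G]}\in X^{[\mathbb{E},G]}$, $G$ finite. For $\chi=(x_f)_{f\in[\mathbb{E},F]}$, $\psi=(y_f)_{f\in[\mathbb{E},G]}$, $\chi\preceq\psi$ means $F$ is an initial segment of $G$ and $y_f=x_f$ for $f\in[\mathbb{E},F]$. An $\mathbb{E}$-vine is a set $\mathcal{V}$ of $\mathbb{E}$-bunches closed under $\preceq$-predecessors; it is well founded if it has no infinite $\preceq$-chain; it is closed if $\mathcal{V}\cap X^{[\mathbb{E},G]}$ is closed in the product topology of $X^{[\mathbb{E},G]}$ for every finite $G$. Derivatives: $\mathcal{V}^{(1)}=\mathcal{V}\setminus\{\chi\in\mathcal{V}:\chi\text{ is }\preceq\text{-maximal}\}$, $\mathcal{V}^{(\alpha+1)}=(\mathcal{V}^{(\alpha)})^{(1)}$, $\mathcal{V}^{(\alpha)}=\bigcap_{\beta<\alpha}\mathcal{V}^{(\beta)}$ for limit $\alpha$; the index is $o(\mathcal{V})=\min\{\alpha:\mathcal{V}^{(\alpha)}=\emptyset\}$. *)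

(* Defs.v *)
From HB Require Import structures.
From mathcomp Require Import all_boot all_order all_algebra finmap.
From mathcomp Require Import all_classical all_reals all_analysis.
Set Implicit Arguments. Unset Strict Implicit. Unset Printing Implicit Defensive.
Import Order.TTheory GRing.Theory Num.Theory.
Local Open Scope classical_set_scope.
Local Open Scope ring_scope.

Section Vines.
Variables (R : realType) (E : set R) (X : topologicalType).

Definition inEG (G : {fset nat}) (f : nat -> R) : Prop :=
  (forall n, E (f n)) /\ (forall n, (n \notin G)%fset -> f n = 0).

Definition EG (G : {fset nat}) : Type := {f : nat -> R | inEG G f}.

Definition bunch : Type := {G : {fset nat} & EG G -> X}.

Definition initial_segment (F G : {fset nat}) : Prop :=
  (F `<=` G)%fset /\
  (forall a b, (a \in F)%fset -> (b \in G)%fset -> (b \notin F)%fset -> (a < b)%N).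

Definition bprec (chi psi : bunch) : Prop :=
  initial_segment (projT1 chi) (projT1 psi) /\
  forall (f : nat -> R) (h1 : inEG (projT1 chi) f) (h2 : inEG (projT1 psi) f),
    projT2 psi (exist _ f h2) = projT2 chi (exist _ f h1).

Definition is_vine (V : set bunch) : Prop :=
  forall chi psi, V psi -> bprec chi psi -> V chi.

Definition vine_well_founded (V : set bunch) : Prop :=
  forall C : set bunch, C `<=` V ->
    (forall a b, C a -> C b -> bprec a b \/ bprec b a) -> finite_set C.

Definition vine_closed (V : set bunch) : Prop :=
  forall G : {fset nat},
    closed ([set x : {ptws EG G -> X} | V (existT (fun G => EG G -> X) G x)]).

Definition vmaximal (V : set bunch) (chi : bunch) : Prop :=
  V chi /\ forall psi, V psi -> bprec chi psi -> psi = chi.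

Definition vderiv (V : set bunch) : set bunch :=
  [set chi | V chi /\ ~ vmaximal V chi].

(* A strict well-order on a type W, representing the ordinal alpha = otp(W)
   (W is the set of ordinals beta < alpha). *)
Definition strict_well_order (W : Type) (lt : W -> W -> Prop) : Prop :=
  (forall a b c, lt a b -> lt b c -> lt a c) /\
  (forall a b, lt a b \/ a = b \/ lt b a) /\
  well_founded lt.

(* the derivative of order beta, given the derivatives D gamma for gamma < beta,
   where the ordinals < beta are the elements of P *)
Definition deriv_step (V : set bunch) (W : Type) (lt : W -> W -> Prop)
   (P : W -> Prop) (D : W -> set bunch) : set bunch -> Prop :=
  fun A =>
    ((forall w, ~ P w) -> A = V) /\
    (forall m, P m -> (forall w, P w -> w = m \/ lt w m) -> A = vderiv (D m)) /\
    ((exists w, P w) -> (forall m, P m -> exists w, P w /\ lt m w) ->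
       A = [set chi | forall w, P w -> D w chi]).

(* D w = V^(beta_w) for every w in W, and A = V^(alpha), alpha = otp(W) *)
Definition transfinite_derivatives (V : set bunch) (W : Type)
   (lt : W -> W -> Prop) (D : W -> set bunch) (A : set bunch) : Prop :=
  (forall w, deriv_step V lt (fun v => lt v w) D (D w)) /\
  deriv_step V lt (fun _ => True) D A.

End Vines.

(* Main.v *)
Require Import Defs.
From HB Require Import structures.
From mathcomp Require Import all_boot all_order all_algebra finmap.
From mathcomp Require Import all_classical all_reals all_analysis.
Import Order.TTheory GRing.Theory Num.Theory.
Local Open Scope classical_set_scope.
Local Open Scope ring_scope.
Section Part1.
Variables (R : realType) (E : set R) (X : topologicalType) (V : set (bunch E X)).
Variables (W : Type) (lt : W -> W -> Prop).
Hypothesis swo : strict_well_order lt.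

Let ltrans : forall a b c, lt a b -> lt b c -> lt a c. Proof. by case: swo. Qed.
Let ltot : forall a b, lt a b \/ a = b \/ lt b a. Proof. by case: swo => _ []. Qed.
Let lwf : well_founded lt. Proof. by case: swo => _ []. Qed.
Let lirr : forall a, ~ lt a a.
Proof. move=> a; elim: (lwf a) => {}a _ IH h; exact: (IH a h h). Qed.

Definition Fstep (P : W -> Prop) (rec : W -> set (bunch E X)) : set (bunch E X) :=
  fun chi =>
 ((forall v, ~P v) /\ V chi) \/
 (exists m, P m /\ (forall v, P v -> v = m \/ lt v m) /\ vderiv (rec m) chi) \/
 ((exists v, P v) /\ (forall m, P m -> exists v, P v /\ lt m v) /\
    forall v, P v -> rec v chi).

Lemma Fstep_ext P r1 r2 : (forall v, P v -> r1 v = r2 v) -> Fstep P r1 = Fstep P r2.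
Proof.
move=> h; rewrite funeqE => chi; apply: propext; rewrite /Fstep; split.
- case=> [?|[[m [Pm [mx H]]]|[a [b c]]]]; [by left| |].
    by right; left; exists m; rewrite -h.
  by right; right; split; [done|split; [done|move=> v Pv; rewrite -h //; exact: c v Pv]].
- case=> [?|[[m [Pm [mx H]]]|[a [b c]]]]; [by left| |].
    by right; left; exists m; rewrite h.
  by right; right; split; [done|split; [done|move=> v Pv; rewrite h //; exact: c v Pv]].
Qed.

Lemma Fstep_spec P D : deriv_step V lt P D (Fstep P D).
Proof.
split; [|split].
- move=> nP; rewrite funeqE => chi; apply: propext; split.
  + case=> [[_ ?]//|[[m [Pm _]]|[[v Pv] _]]]; by case: (nP _ Pm) || case: (nP _ Pv).
  + by move=> ?; left.
- move=> m Pm mx; rewrite funeqE => chi; apply: propext; split.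
  + case=> [[nP _]|[[m' [Pm' [mx' H]]]|[_ [nm _]]]].
    * by case: (nP _ Pm).
    * have [->//|lt1] := mx' _ Pm.
      case: (mx _ Pm') => [e|lt2]; first by subst.
      by case: (lirr _ (ltrans _ _ _ lt1 lt2)).
    * have [v [Pv mv]] := nm _ Pm.
      case: (mx _ Pv) => [e|lt2]; first by subst; case: (lirr _ mv).
      by case: (lirr _ (ltrans _ _ _ mv lt2)).
  + by move=> H; right; left; exists m.
- move=> [v0 Pv0] nm; rewrite funeqE => chi; apply: propext; split.
  + case=> [[nP _]|[[m' [Pm' [mx' H]]]|[_ [_ H]]]] //.
    * by case: (nP _ Pv0).
    * have [v [Pv mv]] := nm _ Pm'.
      case: (mx' _ Pv) => [e|lt2]; first by subst; case: (lirr _ mv).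
      by case: (lirr _ (ltrans _ _ _ mv lt2)).
  + by move=> H; right; right; split; [exists v0|split].
Qed.

Definition Frec (w : W) (r : forall v, lt v w -> set (bunch E X)) : set (bunch E X) :=
  Fstep (fun v => lt v w)
    (fun v => match pselect (lt v w) with left h => r v h | right _ => set0 end).

Definition Dfix : W -> set (bunch E X) := Fix lwf (fun _ => set (bunch E X)) Frec.

Lemma Dfix_eq w : Dfix w = Fstep (fun v => lt v w) Dfix.
Proof.
rewrite /Dfix Fix_eq; last first.
  move=> x f1 f2 h; rewrite /Frec; apply: Fstep_ext => v _.
  by case: pselect.
apply: Fstep_ext => v Pv; case: pselect => //.
Qed.

Definition Afin := Fstep (fun _ => True) Dfix.

Lemma Dfix_td : transfinite_derivatives V lt Dfix Afin.
Proof.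
split; last exact: Fstep_spec.
by move=> w; rewrite Dfix_eq; apply: Fstep_spec.
Qed.

Variable g : bunch E X -> W.
Hypothesis gdec : forall chi psi, V chi -> V psi -> bprec chi psi -> psi <> chi ->
  lt (g psi) (g chi).

Lemma Dfix_sub w chi : Dfix w chi -> V chi /\ ~ lt (g chi) w.
Proof.
elim: (lwf w) chi => {}w _ IH chi; rewrite Dfix_eq.
case=> [[nP Vc]|[[m [Pm [mx [Dm nmax]]]]|[[v0 Pv0] [nm H]]]].
- by split=> // h; case: (nP _ h).
- have [Vc _] := IH m Pm chi Dm.
  have [psi [Dpsi [bp ne]]] : exists psi, Dfix m psi /\ bprec chi psi /\ psi <> chi.
    apply: contrapT => nex; apply: nmax; split=> // psi Dp bp.
    by apply: contrapT => ne; apply: nex; exists psi.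
  have [Vp np] := IH m Pm psi Dpsi.
  have lg := gdec _ _ Vc Vp bp ne.
  split=> // lgw; case: (mx _ lgw) => [e|l2].
  + by apply: np; rewrite -e.
  + by apply: np; apply: ltrans _ _ _ lg l2.
- have [Vc _] := IH v0 Pv0 chi (H _ Pv0).
  split=> // lgw; have [v [Pv mv]] := nm _ lgw.
  have [_ ] := IH v Pv chi (H _ Pv); exact.
Qed.

Lemma Afin_empty (w0 : W) : Afin = set0.
Proof.
rewrite funeqE => chi; apply: propext; split=> // -[].
- by case=> nP _; apply: (nP w0).
- case=> [[m [_ [mx [Dm nmax]]]]|[_ [nm H]]].
  + have [Vc _] := Dfix_sub _ _ Dm.
    have [psi [Dpsi [bp ne]]] : exists psi, Dfix m psi /\ bprec chi psi /\ psi <> chi.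
      apply: contrapT => nex; apply: nmax; split=> // psi Dp bp.
      by apply: contrapT => ne; apply: nex; exists psi.
    have [Vp np] := Dfix_sub _ _ Dpsi.
    have lg := gdec _ _ Vc Vp bp ne.
    case: (mx (g chi) I) => [e|l2].
    * by apply: np; rewrite -e.
    * by apply: np; apply: ltrans _ _ _ lg l2.
  + have [v [_ mv]] := nm (g chi) I.
    have [_] := Dfix_sub _ _ (H v I); exact.
Qed.

End Part1.
Section KB.
Variable T : countType.

Fixpoint kb (u t : seq T) : bool :=
  match u, t with
  | [::], _ => false
  | _ :: _, [::] => true
  | a :: u', b :: t' => (choice.pickle a < choice.pickle b)%N || ((a == b) && kb u' t')
  end.

Lemma kb_irr u : ~~ kb u u.
Proof. by elim: u => //= a u IH; rewrite ltnn eqxx /=. Qed.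

Lemma kb_trans u t v : kb u t -> kb t v -> kb u v.
Proof.
elim: u t v => [|a u IH] [|b t] [|c v] //=.
case/orP=> [lab|/andP[/eqP-> kut]]; case/orP=> [lbc|/andP[/eqP<- ktv]].
- by rewrite (ltn_trans lab lbc).
- by rewrite lab.
- by rewrite lbc.
- by rewrite eqxx (IH _ _ kut ktv) orbT.
Qed.

Lemma kb_total u t : u <> t -> kb u t \/ kb t u.
Proof.
elim: u t => [|a u IH] [|b t] //=; [by right|by left|].
move=> ne; have [eab|nab] := eqVneq a b.
- subst b; rewrite ?ltnn ?eqxx /=; apply: IH => e; apply: ne; by rewrite e.
- have pne : choice.pickle a != choice.pickle b.
    by apply: contraNneq nab => /(pcan_inj choice.pickleK)->.
  by case: (ltngtP (choice.pickle a) (choice.pickle b)) pne => // _ _; [left|right].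
Qed.

Lemma kb_cat s u t : kb (s ++ u) (s ++ t) = kb u t.
Proof. by elim: s => //= a s ->; rewrite ltnn eqxx. Qed.

Lemma kb_prefix s w : ~~ kb s (s ++ w).
Proof. by elim: s => //= a s IH; rewrite ltnn eqxx. Qed.

Section WF.
Variable S : seq T -> Prop.
Hypothesis Spre : forall s w, S (s ++ w) -> S s.
Hypothesis Sacc : forall s, Acc (fun t s => S t /\ exists a, t = rcons s a) s.

Definition Rs (s : seq T) u t := S u /\ (exists w, u = s ++ w) /\ kb u t.

Lemma kb_Q s : forall w, S (s ++ w) -> Acc (Rs s) (s ++ w).
Proof.
elim: (Sacc s) => {}s _ IH.
have stepA : forall a w, S (s ++ a :: w) -> Acc (Rs s) (s ++ a :: w).
  move=> a; move Hn: (choice.pickle a) => n; elim/ltn_ind: n a Hn => n IHn a Hn w Sw.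
  have Ssa : S (rcons s a) by apply: (Spre _ w); rewrite cat_rcons.
  have inner : forall t, Acc (Rs (rcons s a)) t -> forall w', t = rcons s a ++ w' ->
      Acc (Rs s) t.
    move=> t; elim=> {}t _ IHt w' et; rewrite et.
    constructor=> u [Su [[w1 eu] ku]]; subst u.
    rewrite cat_rcons in ku.
    case: w1 Su ku => [|b w''] Su ku.
      by rewrite cats0 in ku; move: (kb_prefix s (a :: w')); rewrite ku.
    rewrite kb_cat /= in ku.
    case/orP: ku => [lba|/andP[/eqP eba kw]].
    - have lbn : (choice.pickle b < n)%N by rewrite -Hn.
      exact: (IHn (choice.pickle b) lbn b erefl w'' Su).
    - subst b; apply: (IHt (s ++ a :: w'')); last by rewrite cat_rcons.
      split; first by [].
      by split; [exists w''; rewrite cat_rcons|rewrite et -[s ++ a :: w'']cat_rcons kb_cat].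
  rewrite -cat_rcons; apply: (inner _ _ w erefl).
  apply: IH; [split; [exact: Ssa|exists a; reflexivity]|rewrite cat_rcons; exact: Sw].
move=> [|a w] Sw; last exact: stepA.
rewrite cats0; constructor=> u [Su [[w' eu] ku]]; subst u.
case: w' Su ku => [|b w''] Su ku; first by rewrite cats0 in ku; move: (kb_irr s); rewrite ku.
exact: stepA.
Qed.

Lemma kb_acc t : S t -> Acc (fun u t => S u /\ kb u t) t.
Proof.
move=> St; have /= := @kb_Q [::] t St.
elim=> {St}t _ IH; constructor=> u [Su ku]; apply: IH.
by split=> //; split=> //; exists u.
Qed.

Definition KBW := {s : seq T | S s}.
Definition kblt (a b : KBW) : Prop := kb (proj1_sig a) (proj1_sig b).

Lemma kb_swo : strict_well_order kblt.
Proof.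
split; [|split].
- by move=> [a ?] [b ?] [c ?]; rewrite /kblt /=; apply: kb_trans.
- move=> [a ha] [b hb]; rewrite /kblt /=.
  have [e|ne] := eqVneq a b.
    subst b; right; left; congr exist; exact: Prop_irrelevance.
  by case: (kb_total _ _ (elimN eqP ne)) => h; [left|right; right].
- move=> x; case: x => a ha; have H := kb_acc _ ha; move: ha.
  elim: H => {}a _ IH ha; constructor=> [[b hb]] kba.
  exact: (IH _ (conj hb kba) hb).
Qed.

Lemma kb_countable : countable [set: KBW].
Proof.
apply/countable_injP; exists (fun x => choice.pickle (proj1_sig x)).
move=> [a ha] [b hb] _ _ /= /(pcan_inj choice.pickleK) e; subst b.
congr exist; exact: Prop_irrelevance.
Qed.

End WF.
End KB.
Arguments kb {T}.
Arguments KBW {T}.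
Arguments kblt {T S}.
Set Implicit Arguments. Unset Strict Implicit.
Section Comb.
Variables (R : realType) (E : set R) (X : topologicalType).
Hypothesis h0 : E 0.

Local Notation bunch := (bunch E X).
Local Notation inEG := (inEG E).
Local Notation bprec := (@bprec R E X).

Definition zeroEG (G : {fset nat}) : EG E G :=
  exist _ (fun _ => 0) (conj (fun _ => h0) (fun _ _ => erefl)).

Definition valueAt (b : bunch) (f : nat -> R) : X :=
  match pselect (inEG (projT1 b) f) with
  | left h => projT2 b (exist _ f h)
  | right _ => projT2 b (zeroEG _)
  end.

Lemma valueAtE (b : bunch) f (h : inEG (projT1 b) f) : projT2 b (exist _ f h) = valueAt b f.
Proof.
rewrite /valueAt; case: pselect => [h'|//]; congr (projT2 b _); congr exist.
exact: Prop_irrelevance.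
Qed.

Lemma inEG_sub F G f : (F `<=` G)%fset -> inEG F f -> inEG G f.
Proof.
move=> /fsubsetP FG [h1 h2]; split=> // n nG; apply: h2.
by apply: contra nG; apply: FG.
Qed.

Lemma bprec_val a b f : bprec a b -> inEG (projT1 a) f -> valueAt b f = valueAt a f.
Proof.
move=> [[sub _] hv] hf.
have hf' := inEG_sub sub hf.
by rewrite -(valueAtE hf) -(valueAtE hf') hv.
Qed.

Lemma bunch_eta (b : bunch) G : projT1 b = G ->
  b = existT (fun G => EG E G -> X) G (fun fp => valueAt b (proj1_sig fp)).
Proof.
case: b => G' x /= e; subst G'; congr existT; apply: funext => -[f hf] /=.
by rewrite -(valueAtE (b := existT _ G x)).
Qed.

Lemma bunch_ext (a b : bunch) : projT1 a = projT1 b ->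
  (forall f, inEG (projT1 a) f -> valueAt a f = valueAt b f) -> a = b.
Proof.
move=> e hv; rewrite (bunch_eta (erefl (projT1 a))) (bunch_eta (esym e)).
congr existT; apply: funext => -[f hf] /=; exact: hv.
Qed.

Lemma initial_refl G : initial_segment G G.
Proof. by split=> // a b _ ->. Qed.

Lemma initial_trans F G H : initial_segment F G -> initial_segment G H -> initial_segment F H.
Proof.
move=> [FG hFG] [GH hGH]; split; first exact: fsubset_trans FG GH.
move=> a b aF bH bF; have [bG|bG] := boolP (b \in G).
- exact: hFG.
- by apply: hGH => //; apply: (fsubsetP FG).
Qed.

Lemma bprec_refl a : bprec a a.
Proof.
split; first exact: initial_refl.
by move=> f h1 h2; rewrite (valueAtE h1) (valueAtE h2).
Qed.

Lemma bprec_trans a b c : bprec a b -> bprec b c -> bprec a c.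
Proof.
move=> ab bc; split; first exact: initial_trans ab.1 bc.1.
move=> f h1 h2; rewrite (valueAtE h1) (valueAtE h2).
have hb : inEG (projT1 b) f := inEG_sub ab.1.1 h1.
by rewrite (bprec_val bc hb) (bprec_val ab h1).
Qed.

Definition sortG (G : {fset nat}) : seq nat := sort leq (enum_fset G).

Lemma sortG_ltn G : sorted ltn (sortG G).
Proof.
by rewrite ltn_sorted_uniq_leq sort_uniq fset_uniq sort_sorted //; apply: leq_total.
Qed.

Lemma mem_sortG G x : (x \in sortG G) = (x \in G).
Proof. by rewrite mem_sort. Qed.

Lemma size_sortG G : size (sortG G) = #|` G|.
Proof. by rewrite size_sort. Qed.

Lemma sortG_init F G : initial_segment F G -> sortG G = sortG F ++ sortG (G `\` F)%fset.
Proof.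
move=> [FG hFG]; apply: (irr_sorted_eq (leT := ltn)).
- exact: ltn_trans.
- exact: ltnn.
- exact: sortG_ltn.
- rewrite sorted_pairwise; last exact: ltn_trans.
  rewrite pairwise_cat; apply/and3P; split.
  + apply/allrelP => a b.
    rewrite !mem_sortG inE => aF /andP[bF bG]; exact: hFG.
  + rewrite -sorted_pairwise; [exact: sortG_ltn|exact: ltn_trans].
  + rewrite -sorted_pairwise; [exact: sortG_ltn|exact: ltn_trans].
- move=> x; rewrite mem_cat !mem_sortG inE.
  case xF: (x \in F) => /=; last by rewrite ?andbT.
  by rewrite (fsubsetP FG).
Qed.

Definition Gseg (G : {fset nat}) (j : nat) : {fset nat} := [fset x in take j (sortG G)]%fset.

Lemma mem_Gseg G j x : (x \in Gseg G j) = (x \in take j (sortG G)).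
Proof. by rewrite inE. Qed.

Lemma Gseg_sub G j : (Gseg G j `<=` G)%fset.
Proof. by apply/fsubsetP => x; rewrite mem_Gseg => /mem_take; rewrite mem_sortG. Qed.

Lemma card_Gseg G j : (j <= #|` G|)%N -> #|` Gseg G j| = j.
Proof.
move=> jG; rewrite card_fseq undup_id ?size_take ?size_sortG.
  by case: ltnP jG => // ? ?; apply/eqP; rewrite eqn_leq; apply/andP.
by apply: take_uniq; rewrite sort_uniq fset_uniq.
Qed.

Lemma Gseg_full G : Gseg G #|` G| = G.
Proof.
apply/fsetP => x; rewrite mem_Gseg -size_sortG take_size mem_sortG //.
Qed.

Lemma Gseg_init G j k : (j <= k)%N -> initial_segment (Gseg G j) (Gseg G k).
Proof.
move=> jk; split.
  apply/fsubsetP => x; rewrite !mem_Gseg => xj.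
  by rewrite -(take_takel _ jk) in xj; apply: mem_take xj.
move=> a b; rewrite !mem_Gseg => aj bk bj.
have sk : sorted ltn (take k (sortG G)).
  move: (sortG_ltn G); rewrite -{1}(cat_take_drop k (sortG G)).
  by move/cat_sorted2 => [].
move: sk bk; rewrite -(cat_take_drop j (take k (sortG G))) (take_takel _ jk).
rewrite sorted_pairwise; last exact: ltn_trans.
rewrite pairwise_cat mem_cat (negbTE bj) /= => /and3P[/allrelP H _ _] bd.
exact: H.
Qed.

Lemma Gseg_initG G j : initial_segment (Gseg G j) G.
Proof.
have [jG|Gj] := leqP j #|` G|; first by rewrite -{2}(Gseg_full G); apply: Gseg_init.
have -> : Gseg G j = G.
  apply/fsetP => x; rewrite mem_Gseg take_oversize ?mem_sortG // size_sortG.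
  exact: ltnW.
exact: initial_refl.
Qed.

Lemma Gseg_of_init F G j : initial_segment F G -> (j <= #|` F|)%N -> Gseg F j = Gseg G j.
Proof.
move=> FG jF; rewrite /Gseg (sortG_init FG) take_cat size_sortG.
case: ltnP => // Fj.
have -> : j = #|` F| by apply/eqP; rewrite eqn_leq jF.
by rewrite subnn take0 cats0 take_oversize // size_sortG.
Qed.

End Comb.
Lemma kb_ext (T : countType) (s : seq T) a w : kb (s ++ a :: w) s.
Proof. by elim: s => //= x s IH; rewrite ltnn eqxx IH. Qed.

Section Tree.
Variables (R : realType) (E : set R) (X : topologicalType).
Hypothesis h0 : E 0.
Variable V : set (bunch E X).
Hypothesis hvine : is_vine V.
Variable d : X -> X -> R.
Variable Dn : nat -> X.
Hypothesis hDn : forall x (e : R), 0 < e -> exists k, d x (Dn k) < e.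
Variable eidx : R -> nat.
Hypothesis eidx_inj : {in E &, injective eidx}.

Local Notation bunch := (bunch E X).
Local Notation inEG := (inEG E).
Local Notation bprec := (@bprec R E X).
Local Notation valueAt := (valueAt h0).

Definition eps (n : nat) : R := (n.+1%:R)^-1.

Lemma eps_gt0 n : 0 < eps n.
Proof. by rewrite /eps invr_gt0 ltr0n. Qed.

Definition code (G : {fset nat}) (f : nat -> R) : nat :=
  choice.pickle [seq eidx (f n) | n <- sortG G].

Lemma code_inj G f f' : inEG G f -> inEG G f' -> code G f = code G f' -> f = f'.
Proof.
move=> [hf1 hf2] [hf1' hf2'] /(pcan_inj choice.pickleK) /eq_in_map e.
apply: funext => n; have [nG|nG] := boolP (n \in G).
- apply: eidx_inj; rewrite ?in_setE //; apply: e; by rewrite mem_sortG.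
- by rewrite hf2 // hf2'.
Qed.

Definition approx (chi : bunch) (Gi : {fset nat}) (j p : nat) : nat :=
  match pselect (exists f, inEG Gi f /\ code Gi f = p) with
  | left H => xget 0%N [set k | d (valueAt chi (proj1_sig (cid H))) (Dn k) < eps j]
  | right _ => 0%N
  end.

Lemma approxP chi Gi j f : inEG Gi f ->
  d (valueAt chi f) (Dn (approx chi Gi j (code Gi f))) < eps j.
Proof.
move=> hf; rewrite /approx; case: pselect => [H|[]]; last by exists f.
case: (cid H) => f' [hf' ec] /=.
have -> := code_inj hf' hf ec.
by apply: (@xgetPex _ 0%N [set k | d (valueAt chi f) (Dn k) < eps j]); apply: hDn; apply: eps_gt0.
Qed.

Lemma approx_eq chi psi Gi j p : (forall f, inEG Gi f -> valueAt chi f = valueAt psi f) ->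
  approx chi Gi j p = approx psi Gi j p.
Proof.
move=> h; rewrite /approx; case: pselect => // H.
by case: (cid H) => f [hf _] /=; rewrite h.
Qed.

Definition Ent := ({fset nat} * seq (seq nat))%type.
Definition e0 : Ent := (fset0, [::]).

Definition ent (chi : bunch) (j : nat) : Ent :=
  (Gseg (projT1 chi) j,
   [seq [seq approx chi (Gseg (projT1 chi) i) j p | p <- iota 0 j.+1] | i <- iota 0 j.+1]).

Definition hnode (chi : bunch) : seq Ent := [seq ent chi j | j <- iota 0 (#|` projT1 chi|).+1].

Lemma size_hnode chi : size (hnode chi) = (#|` projT1 chi|).+1.
Proof. by rewrite size_map size_iota. Qed.

Lemma nth_hnode chi n : (n < size (hnode chi))%N -> nth e0 (hnode chi) n = ent chi n.
Proof. by rewrite size_hnode => hn; rewrite (nth_map 0%N) ?size_iota // nth_iota. Qed.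

Definition Sgood (s : seq Ent) : Prop := exists c : nat -> bunch, forall n, (n < size s)%N ->
  [/\ V (c n), projT1 (c n) = (nth e0 s n).1, #|` projT1 (c n)| = n,
      ((n.+1 < size s)%N -> bprec (c n) (c n.+1)) &
      forall i f, (i <= n)%N -> inEG (projT1 (c i)) f -> (code (projT1 (c i)) f <= n)%N ->
        d (valueAt (c i) f) (Dn (nth 0%N (nth [::] (nth e0 s n).2 i) (code (projT1 (c i)) f)))
          < eps n ].

Lemma Sgood_pre s w : Sgood (s ++ w) -> Sgood s.
Proof.
move=> [c hc]; exists c => n ns.
have nsw : (n < size (s ++ w))%N by rewrite size_cat ltn_addr.
have [h1 h2 h3 h4 h5] := hc n nsw; split=> //.
- by rewrite h2 nth_cat ns.
- by move=> n1s; apply: h4; rewrite size_cat ltn_addr.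
- have e : nth e0 s n = nth e0 (s ++ w) n by rewrite nth_cat ns.
  by move=> i f ni hf cf; rewrite e; apply: h5.
Qed.

Definition restr (chi : bunch) (F : {fset nat}) : bunch :=
  existT (fun G => EG E G -> X) F (fun fp => valueAt chi (proj1_sig fp)).

Lemma valueAt_restr chi F f : inEG F f -> valueAt (restr chi F) f = valueAt chi f.
Proof. by move=> hf; rewrite -(valueAtE h0 (b := restr chi F) hf). Qed.

Lemma bprec_restr chi F G : initial_segment F G -> (F `<=` projT1 chi)%fset ->
  bprec (restr chi F) (restr chi G).
Proof.
by move=> FG _; split.
Qed.

Lemma bprec_restr_full chi F : initial_segment F (projT1 chi) -> bprec (restr chi F) chi.
Proof.
move=> FG; split=> // f h1 h2.
by rewrite (valueAtE h0 h1) (valueAtE h0 h2) valueAt_restr.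
Qed.

Lemma hnode_good chi : V chi -> Sgood (hnode chi).
Proof.
move=> Vc; set G := projT1 chi.
exists (fun n => restr chi (Gseg G n)) => n; rewrite size_hnode => nG.
rewrite nth_hnode ?size_hnode //; split.
- apply: (hvine Vc); apply: bprec_restr_full; exact: Gseg_initG.
- by [].
- by rewrite /= card_Gseg.
- move=> _; apply: bprec_restr; [exact: Gseg_init|exact: Gseg_sub].
- move=> i f ni hf cf.
  change (ent chi n).2 with
    [seq [seq approx chi (Gseg G i0) n p | p <- iota 0 n.+1] | i0 <- iota 0 n.+1].
  rewrite (nth_map 0%N) ?size_iota ?ltnS // nth_iota ?ltnS // add0n.
  rewrite (nth_map 0%N) ?size_iota ?ltnS // nth_iota ?ltnS // add0n.
  rewrite valueAt_restr //; exact: approxP.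
Qed.

Lemma hnode_prefix psi chi : bprec psi chi -> exists w, hnode chi = hnode psi ++ w.
Proof.
move=> pc; have FG := pc.1; set F := projT1 psi; set G := projT1 chi.
have le : (#|` F| <= #|` G|)%N by apply: fsubset_leq_card; exact: FG.1.
exists [seq ent chi j | j <- iota (#|` F|).+1 (#|` G| - #|` F|)].
rewrite /hnode -/F -/G.
rewrite -(subnKC (_ : (#|` F|).+1 <= (#|` G|).+1)%N) // iotaD subSS map_cat.
congr (_ ++ _).
apply/eq_in_map => j; rewrite mem_iota add0n ltnS => /andP[_ jF].
rewrite /ent -/F -/G (Gseg_of_init FG jF); congr pair.
apply/eq_in_map => i; rewrite mem_iota add0n ltnS => /andP[_ ij].
rewrite (Gseg_of_init FG (leq_trans ij jF)).
apply/eq_in_map => p _; apply: approx_eq => f hf.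
rewrite -(Gseg_of_init FG (leq_trans ij jF)) in hf.
apply: (bprec_val h0 pc); apply: inEG_sub hf; exact: Gseg_sub.
Qed.

Lemma hnode_dec chi psi : bprec chi psi -> psi <> chi -> kb (hnode psi) (hnode chi).
Proof.
move=> bp ne; have [w ew] := hnode_prefix bp.
case: w ew => [|a w] ew; last by rewrite ew kb_ext.
exfalso; apply: ne; symmetry.
have sz : #|` projT1 psi| = #|` projT1 chi|.
  by move: (congr1 size ew); rewrite cats0 !size_hnode => -[].
have eG : projT1 chi = projT1 psi.
  by apply/eqP; rewrite eqEfcard bp.1.1 sz leqnn.
by apply: (bunch_ext eG) => f hf; rewrite (bprec_val h0 bp hf).
Qed.

End Tree.
Lemma ptws_cvg_of (U : Type) (Y : topologicalType) (F : set_system {ptws U -> Y}) (l : {ptws U -> Y}) :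
  Filter F ->
  (forall t, (fun g : {ptws U -> Y} => g t) @ F --> l t) -> F --> l.
Proof.
move=> FF h.
apply/(@cvg_sup (forall t : U, Y) U (fun t => Topological.class (initial_topology (fun f : (forall i, Y) => f t))) F l FF) => t.
move=> A /=.
rewrite (@nbhsE (initial_topology (fun f : (forall i, Y) => f t))) => -[B [oB Bl] BA].
case: oB => C oC eC; subst B.
have : nbhs (l t) C.
  rewrite nbhsE; exists C; last by [].
  by split.
move/h => FC; apply: (@filterS _ F FF _ _ _ FC) => g Cg; exact: BA.
Qed.

Section Topo.
Variables (R : realType) (X : topologicalType).
Variable d : X -> X -> R.
Hypothesis dpos : forall x y, 0 <= d x y.
Hypothesis dzero : forall x y, d x y = 0 <-> x = y.
Hypothesis dsym : forall x y, d x y = d y x.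
Hypothesis dtri : forall x y z, d x z <= d x y + d y z.
Hypothesis dopen : forall A : set X, open A <->
         forall x, A x -> exists2 e : R, 0 < e & [set y | d x y < e] `<=` A.

Lemma eps_small (e : R) : 0 < e -> exists N, forall n, (N <= n)%N -> eps R n < e.
Proof.
move=> e0; have ie : 0 <= e^-1 by rewrite invr_ge0 ltW.
exists (Num.Def.archi_bound e^-1) => n hn.
rewrite /eps invf_plt ?posrE ?ltr0n //.
apply: (lt_le_trans (archi_boundP ie)).
by rewrite ler_nat (leq_trans hn).
Qed.

Lemma d_eq x y : (forall e : R, 0 < e -> d x y < e) -> x = y.
Proof.
move=> h; apply/dzero; apply/eqP; rewrite eq_le dpos andbT.
rewrite leNgt; apply/negP => dp; have := h _ dp; by rewrite ltxx.
Qed.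

Lemma metric_cvg (u : nat -> X) l :
  (forall e : R, 0 < e -> exists N, forall n, (N <= n)%N -> d (u n) l < e) ->
  u @ \oo --> l.
Proof.
move=> h A; rewrite nbhsE => -[B [oB Bl] BA].
have [e e0 be] := (dopen B).1 oB l Bl.
have [N hN] := h e e0.
exists N => // n /= hn; apply: BA; apply: be; rewrite /= dsym; exact: hN.
Qed.

End Topo.
Section Main.
Variables (R : realType) (E : set R) (X : topologicalType).
Hypothesis h0 : E 0.
Variable V : set (bunch E X).
Hypothesis hclosed : vine_closed V.
Hypothesis hwf : vine_well_founded V.
Variable d : X -> X -> R.
Hypothesis dpos : forall x y, 0 <= d x y.
Hypothesis dzero : forall x y, d x y = 0 <-> x = y.
Hypothesis dsym : forall x y, d x y = d y x.
Hypothesis dtri : forall x y z, d x z <= d x y + d y z.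
Hypothesis dopen : forall A : set X, open A <->
         forall x, A x -> exists2 e : R, 0 < e & [set y | d x y < e] `<=` A.
Hypothesis dcomp : forall u : nat -> X,
         (forall e : R, 0 < e -> exists N, forall m n, (N <= m)%N -> (N <= n)%N ->
            d (u m) (u n) < e) ->
         exists l, forall e : R, 0 < e -> exists N, forall n, (N <= n)%N -> d (u n) l < e.
Variable Dn : nat -> X.
Variable eidx : R -> nat.

Local Notation bunch := (bunch E X).
Local Notation Sg := (Sgood h0 V d Dn eidx).
Local Notation vA := (valueAt h0).
Local Notation epsn := (eps R).
Local Notation codeG := (code eidx).

Definition child (t s : seq Ent) := Sg t /\ exists a, t = rcons s a.

Lemma half_lt (e : R) : 0 < e -> 0 < e / 2.
Proof. by move=> e0; rewrite divr_gt0. Qed.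

Lemma Sacc s0 : Acc child s0.
Proof.
apply: contrapT => nA.
have step : forall s, ~ Acc child s -> exists a, Sg (rcons s a) /\ ~ Acc child (rcons s a).
  move=> s nAs; apply: contrapT => nex; apply: nAs; constructor => t [St [a et]]; subst t.
  by apply: contrapT => nAt; apply: nex; exists a.
pose next s := match pselect (exists a, Sg (rcons s a) /\ ~ Acc child (rcons s a)) with
  | left H => rcons s (proj1_sig (cid H)) | right _ => s end.
pose b n := iter n next s0.
have nAb : forall n, ~ Acc child (b n).
  elim=> [//|n IH]; rewrite /b /= -/(b n) /next.
  case: pselect => [H|[]]; last exact: step _ IH.
  by case: (cid H) => a [].
have bS : forall n, Sg (b n.+1) /\ exists a, b n.+1 = rcons (b n) a.
  move=> n; rewrite /b /= -/(b n) /next.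
  case: pselect => [H|[]]; last exact: step _ (nAb n).
  by case: (cid H) => a [Sa _] /=; split=> //; exists a.
clearbody b; clear nAb step next nA.
have size_b : forall n, size (b n) = (size (b 0) + n)%N.
  elim=> [|n IH]; first by rewrite addn0.
  by have [_ [a ->]] := bS n; rewrite size_rcons IH addnS.
have pre_b : forall m n, (m <= n)%N -> exists w, b n = b m ++ w.
  move=> m; elim=> [|n IH] mn.
    by exists [::]; move: mn; rewrite leqn0 => /eqP ->; rewrite cats0.
  case: (ltngtP m n.+1) mn => // [mn|<-] _; last by exists [::]; rewrite cats0.
  have [w ew] := IH mn; have [_ [a ->]] := bS n.
  by exists (rcons w a); rewrite ew rcons_cat.
have nth_b : forall i m n, (m <= n)%N -> (i < size (b m))%N -> nth e0 (b n) i = nth e0 (b m) i.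
  move=> i m n mn im; have [w ->] := pre_b m n mn; by rewrite nth_cat im.
pose cw n := proj1_sig (cid (bS n).1).
have cwP : forall n k, (k < size (b n.+1))%N -> _ := fun n => proj2_sig (cid (bS n).1).
pose ent i := nth e0 (b i.+1) i.
have entE : forall i n, (i <= n)%N -> nth e0 (b n.+1) i = ent i.
  by move=> i n iN; apply: nth_b => //; rewrite size_b addnS ltnS leq_addl.
pose Gi i := (ent i).1.
pose pnt i f k := Dn (nth 0%N (nth [::] (ent k).2 i) (codeG (Gi i) f)).
have W : forall n k, (k <= n)%N ->
   [/\ V (cw n k), projT1 (cw n k) = Gi k, #|` Gi k| = k,
       ((k < n)%N -> bprec (cw n k) (cw n k.+1)) &
       forall i f, (i <= k)%N -> inEG E (Gi i) f -> (codeG (Gi i) f <= k)%N ->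
         d (vA (cw n i) f) (pnt i f k) < epsn k].
  move=> n k kn.
  have kS : (k < size (b n.+1))%N by rewrite size_b addnS ltnS (leq_trans kn) ?leq_addl.
  have [h1 h2 h3 h4 h5] := cwP n k kS.
  have e2 : projT1 (cw n k) = Gi k by rewrite h2 entE.
  split=> //.
  - by rewrite -e2.
  - by move=> kn'; apply: h4; rewrite size_b !addnS !ltnS (leq_trans kn') ?leq_addl.
  - move=> i f ik hf cf.
    have iS : (i < size (b n.+1))%N by apply: leq_ltn_trans kS.
    have [_ h2' _ _ _] := cwP n i iS.
    have ei : projT1 (cw n i) = Gi i by rewrite h2' entE // (leq_trans ik).
    have := h5 i f ik; rewrite ei => /(_ hf cf).
    by rewrite /pnt entE.
have cauchy : forall i f k k', inEG E (Gi i) f -> (i + codeG (Gi i) f <= k)%N ->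
    (i + codeG (Gi i) f <= k')%N -> d (pnt i f k) (pnt i f k') < epsn k + epsn k'.
  move=> i f k k' hf hk hk'.
  have kn : (k <= k + k')%N by apply: leq_addr.
  have kn' : (k' <= k + k')%N by apply: leq_addl.
  have [_ _ _ _ H1] := W _ _ kn.
  have [_ _ _ _ H2] := W _ _ kn'.
  have a1 := H1 i f (leq_trans (leq_addr _ _) hk) hf (leq_trans (leq_addl _ _) hk).
  have a2 := H2 i f (leq_trans (leq_addr _ _) hk') hf (leq_trans (leq_addl _ _) hk').
  apply: (le_lt_trans (dtri _ (vA (cw (k + k')%N i) f) _)).
  by rewrite dsym; apply: ltrD.
have ex_lim : forall i f, exists l, inEG E (Gi i) f -> forall e : R, 0 < e ->
    exists N, forall m, (N <= m)%N -> d (pnt i f m) l < e.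
  move=> i f; case: (pselect (inEG E (Gi i) f)) => hf; last by exists (Dn 0).
  pose M := (i + codeG (Gi i) f)%N.
  have [|l hl] := @dcomp (fun m : nat => pnt i f (addn M m)); last first.
    exists l => _ e e0; have [N hN] := hl e e0; exists (M + N)%N => m hm.
    have Mm : (M <= m)%N by apply: leq_trans hm; apply: leq_addr.
    have := hN (m - M)%N; rewrite subnKC //; apply.
    by rewrite leq_subRL // addnC.
  move=> e e0; have [N hN] := eps_small (half_lt e0).
  exists N => m n hm hn.
  apply: (lt_le_trans (cauchy i f _ _ hf (leq_addr _ _) (leq_addr _ _))).
  rewrite [e]splitr; apply: lerD; apply: ltW; apply: hN.
  - by apply: leq_trans hm _; apply: leq_addl.
  - by apply: leq_trans hn _; apply: leq_addl.
pose yv i f := proj1_sig (cid (ex_lim i f)).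
have yvP : forall i f, inEG E (Gi i) f -> forall e : R, 0 < e ->
    exists N, forall m, (N <= m)%N -> d (pnt i f m) (yv i f) < e.
  by move=> i f; exact: (proj2_sig (cid (ex_lim i f))).
have Y1 : forall i f, inEG E (Gi i) f -> forall e : R, 0 < e ->
    exists N, forall n, (N <= n)%N -> d (vA (cw n i) f) (yv i f) < e.
  move=> i f hf e e0.
  have [N1 hN1] := yvP i f hf _ (half_lt e0).
  have [N2 hN2] := eps_small (half_lt e0).
  exists (maxn (maxn N1 N2) (i + codeG (Gi i) f)) => n.
  rewrite !geq_max => /andP[/andP[n1 n2] n3].
  have [_ _ _ _ H] := W n n (leqnn n).
  have := H i f (leq_trans (leq_addr _ _) n3) hf (leq_trans (leq_addl _ _) n3).
  move=> a1; apply: (le_lt_trans (dtri _ (pnt i f n) _)).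
  rewrite [e]splitr; apply: ltrD.
  - by apply: lt_trans a1 (hN2 _ n2).
  - exact: hN1.
have Y2 : forall i f, inEG E (Gi i) f -> inEG E (Gi i.+1) f -> yv i.+1 f = yv i f.
  move=> i f hf hf'; apply: (d_eq dpos dzero) => e e0.
  have [N1 hN1] := Y1 _ _ hf' _ (half_lt e0).
  have [N2 hN2] := Y1 _ _ hf _ (half_lt e0).
  pose n := maxn (maxn N1 N2) i.+1.
  have n1 : (N1 <= n)%N by rewrite /n !leq_max leqnn.
  have n2 : (N2 <= n)%N by rewrite /n !leq_max leqnn orbT.
  have n3 : (i < n)%N by rewrite /n !leq_max leqnn orbT.
  have [_ e1 _ H4 _] := W n i (ltnW n3).
  have hfi : inEG E (projT1 (cw n i)) f by rewrite e1.
  have ev := bprec_val h0 (H4 n3) hfi.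
  apply: (le_lt_trans (dtri _ (vA (cw n i) f) _)).
  rewrite [e]splitr; apply: ltrD.
  - by rewrite dsym -ev; apply: hN1.
  - exact: hN2.
pose y i : bunch := existT (fun G => EG E G -> X) (Gi i) (fun fp => yv i (proj1_sig fp)).
have Y3 : forall i, V (y i).
  move=> i.
  pose A := [set x : {ptws EG E (Gi i) -> X} |
                V (existT (fun G => EG E G -> X) (Gi i) x)].
  have cA : closed A := @hclosed (Gi i).

  pose xs (n : nat) : {ptws EG E (Gi i) -> X} :=
    fun fp => vA (cw (n + i)%N i) (proj1_sig fp).
  have Axs : forall n, A (xs n).
    move=> n; have [h1 h2 _ _ _] := W (n + i)%N i (leq_addl _ _).
    by rewrite /A /= /xs -(bunch_eta h0 h2).
  apply: (@closed_cvg nat _ \oo _ xs A cA); first exact: nearW.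
  apply: ptws_cvg_of => -[f hf].
  have := @metric_cvg _ _ d dsym dopen (fun n => xs n (exist _ f hf)) (yv i f).
  apply => e e0.
  have [N hN] := Y1 i f hf e e0.
  by exists N => n hn; apply: hN; apply: leq_trans hn _; apply: leq_addr.
have Y4 : forall i, bprec (y i) (y i.+1).
  move=> i; have [_ e1 _ H4 _] := W i.+1 i (leqnSn i).
  have [_ e2 _ _ _] := W i.+1 i.+1 (leqnn _).
  have bp := H4 (ltnSn i).
  split.
    by have := bp.1; rewrite e1 e2.
  by move=> f h1 h2 /=; apply: Y2.
have Y5 : forall i j, (i <= j)%N -> bprec (y i) (y j).
  move=> i; elim=> [|j IH] ij.
    by move: ij; rewrite leqn0 => /eqP ->; apply: bprec_refl.
  case: (ltngtP i j.+1) ij => // [ij|<-] _; last exact: bprec_refl.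
  by have := bprec_trans h0 (IH ij) (Y4 j).
have Y6 : injective y.
  move=> i j eij.
  have := congr1 (fun b : bunch => #|` projT1 b|) eij => /=.
  have [_ _ c1 _ _] := W i i (leqnn _).
  have [_ _ c2 _ _] := W j j (leqnn _).
  by rewrite c1 c2.
have fin : finite_set (range y).
  apply: hwf.
    by move=> _ [i _ <-]; apply: Y3.
  move=> _ _ [i _ <-] [j _ <-].
  by case: (leqP i j) => ij; [left; apply: Y5|right; apply: Y5; apply: ltnW].
apply: infinite_nat.
apply: (card_le_finite _ fin).
have := @inj_card_eq _ _ [set: nat] y (in2W Y6).
by rewrite card_eq_le => /andP[].
Qed.

End Main.
Unset Implicit Arguments.

Lemma unit_swo : strict_well_order (fun _ _ : unit => False).
Proof.
split; [by []|split; [by move=> [] []; right; left|]].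
by move=> a; constructor.
Qed.

Theorem proposition3p2 (R : realType) (E : set R) (X : topologicalType)
  (V : set (bunch E X)) :
  countable E -> E 0 ->
  ( (* X is a Polish space: separable and completely metrizable *)
    (exists D : set X, countable D /\ dense D) /\
    exists d : X -> X -> R,
      (forall x y, 0 <= d x y) /\ (forall x y, d x y = 0 <-> x = y) /\
      (forall x y, d x y = d y x) /\ (forall x y z, d x z <= d x y + d y z) /\
      (forall A : set X, open A <->
         forall x, A x -> exists2 e : R, 0 < e & [set y | d x y < e] `<=` A) /\
      (forall u : nat -> X,
         (forall e : R, 0 < e -> exists N, forall m n, (N <= m)%N -> (N <= n)%N ->
            d (u m) (u n) < e) ->
         exists l, forall e : R, 0 < e -> exists N, forall n, (N <= n)%N -> d (u n) l < e) ) ->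
  is_vine V -> vine_closed V ->
  vine_well_founded V ->
  exists (W : Type) (lt : W -> W -> Prop) (D : W -> set (bunch E X)) (A : set (bunch E X)),
    countable [set: W] /\ strict_well_order lt /\
    transfinite_derivatives V lt D A /\ A = set0.
Proof.
move=> hE h0 [[D [cD dD]] [d [dpos [dzero [dsym [dtri [dopen dcomp]]]]]]] hvine hcl hwf.
case: (pselect (exists chi, V chi)) => [[chi0 V0]|nV]; last first.
  exists unit, (fun _ _ => False).
  exists (@Dfix R E X V unit _ unit_swo), (@Afin R E X V unit _ unit_swo).
  split; first exact: countableP.
  split; first exact: unit_swo.
  split; first exact: Dfix_td.
  apply: (@Afin_empty R E X V unit _ unit_swo (fun _ => tt)) => //.
  by move=> chi psi Vc; case: nV; exists chi.
pose x0 := projT2 chi0 (zeroEG h0 _).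
have /countable_injP [fD fDinj] := cD.
pose Dn (k : nat) : X := xget x0 [set x | D x /\ fD x = k].
have hDn : forall x (e : R), 0 < e -> exists k, d x (Dn k) < e.
  move=> x e e0.
  have oB : open [set y | d x y < e].
    apply/dopen => y /= dy; exists (e - d x y); first by rewrite subr_gt0.
    move=> z /= dz; apply: (le_lt_trans (dtri x y z)).
    by rewrite -ltrBrDl.
  have Bx : [set y | d x y < e] x by rewrite /= (proj2 (dzero x x) erefl).
  have [z [Bz Dz]] := dD _ (ex_intro _ x Bx) oB.
  exists (fD z).
  have : [set x | D x /\ fD x = fD z] (Dn (fD z)).
    by apply: xgetPex; exists z.
  move=> [Dk ek]; have -> : Dn (fD z) = z.
    by apply: fDinj; rewrite ?in_setE.
  exact: Bz.
have /countable_injP [eidx eidx_inj] := hE.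
pose Sg := Sgood h0 V d Dn eidx.
have Spre : forall s w, Sg (s ++ w) -> Sg s by move=> s w; apply: Sgood_pre.
have Sac := @Sacc R E X h0 V hcl hwf d dpos dzero dsym dtri dopen dcomp Dn eidx.
have swo := @kb_swo Ent Sg Spre Sac.
pose g (chi : bunch E X) : KBW Sg :=
  match pselect (V chi) with
  | left h => exist _ (hnode h0 d Dn eidx chi) (hnode_good h0 hvine hDn eidx_inj h)
  | right _ => exist _ (hnode h0 d Dn eidx chi0) (hnode_good h0 hvine hDn eidx_inj V0)
  end.
exists (KBW Sg), kblt.
exists (@Dfix R E X V _ _ swo), (@Afin R E X V _ _ swo).
split; first exact: kb_countable.
split; first exact: swo.
split; first exact: Dfix_td.
apply: (@Afin_empty R E X V _ _ swo g _ (g chi0)).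
move=> chi psi Vc Vp bp ne.
rewrite /g /kblt; case: pselect => // hp; case: pselect => // hc /=.
exact: hnode_dec.
Qed.
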